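(* Let $(X,\mathcal{B})$ be a $t$-$(v,k,1)$-design (with $2\le t<k<v$) and let $B \in \mathcal{B}$. Let $p$ be the probability that a block is available and $q = 1-p$. Then \[\mathcal{R}(p) = 1 + \sum_{i=1}^{k} (-1)^{i}\binom{k}{i} q^{e_i},\] where $r_j = \binom{v-j}{t-j}\big/\binom{k-j}{t-j}$ for $1 \le j \le t$, and \[e_i = \sum_{j=1}^{\min\{i,t-1\}} (-1)^{j+1}\binom{i}{j}(r_j - 1), \quad 1 \le i \le k.\]
   Context: A $t$-$(v,k,\lambda)$-design is a set $X$ of $v$ points together with a collection $\mathcal{B}$ of $k$-subsets of $X$ (blocks) such that every $t$-subset of $X$ lies in exactly $\lambda$ blocks; for $\lambda=1$, $r_j$ as given is the number of blocks containing any fixed set of $j$ points. Reliability model: fix a block $B\in\mathcal{B}$. A repair set for $B$ is a subset $\mathcal{P}\subseteq \mathcal{B}\setminus\{B\}$ with $B \subseteq \bigcup_{B'\in\mathcal{P}} B'$. Each block of $\mathcal{B}\setminus\{B\}$ is, independently of the others, available with probability $p\in[0,1]$; a repair set is available if all of its blocks are available. $\mathcal{R}(p)$ is the probability that at least one available repair set for $B$ exists. *)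

(* Defs.v *)
From HB Require Import structures.
From mathcomp Require Import all_boot all_order all_algebra.
Set Implicit Arguments. Unset Strict Implicit. Unset Printing Implicit Defensive.
Import Order.TTheory GRing.Theory Num.Theory.

Definition is_design1 (T : finType) (blocks : {set {set T}}) (t k : nat) : Prop :=
  (forall b, b \in blocks -> #|b| = k) /\
  (forall S : {set T}, #|S| = t -> #|[set b in blocks | S \subset b]| = 1%N).

Definition repair_set (T : finType) (blocks : {set {set T}}) (B0 : {set T})
  (P : {set {set T}}) : bool :=
  (P \subset blocks :\ B0) && (B0 \subset \bigcup_(b in P) b).

Local Open Scope ring_scope.

(* R(p): each block of blocks \ {B0} is available independently with prob. p;
   probability that some repair set consisting of available blocks exists. *)
Definition reliability (R : realFieldType) (T : finType)
  (blocks : {set {set T}}) (B0 : {set T}) (p : R) : R :=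
  \sum_(A in powerset (blocks :\ B0))
     (p ^+ #|A| * (1 - p) ^+ #|(blocks :\ B0) :\: A| *
      (if [exists P in powerset A, repair_set blocks B0 P] then 1 else 0)).

(* r_j = C(v-j, t-j) / C(k-j, t-j)  (an integer for a design) *)
Definition r_des (v k t j : nat) : nat := ('C(v - j, t - j) %/ 'C(k - j, t - j))%N.

Definition e_des (v k t i : nat) : int :=
  \sum_(1 <= j < (minn i (t - 1)).+1)
     ((-1) ^+ j.+1 * ('C(i, j))%:Z * ((r_des v k t j)%:Z - 1)).

(* Main.v *)
Require Import Defs.

From HB Require Import structures.
From mathcomp Require Import all_boot all_order all_algebra.
From mathcomp Require Import zify.
Import Order.TTheory GRing.Theory Num.Theory.
Local Open Scope ring_scope.

Lemma sum_powerset_card (R : nmodType) (T : finType) (X : {set T}) (F : nat -> R) :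
  \sum_(S in powerset X) F #|S| = \sum_(i < #|X|.+1) F i *+ 'C(#|X|, i).
Proof.
rewrite (partition_big (fun S : {set T} => (inord #|S| : 'I_#|X|.+1)) xpredT) //=.
apply: eq_bigr => i _.
rewrite (eq_bigl (fun S : {set T} => S \in [set S0 : {set T} | (S0 \subset X) && (#|S0| == i)])); last first.
  move=> S; rewrite [in RHS]inE powersetE; case: (boolP (S \subset X)) => //= sSX.
  have le : (#|S| < #|X|.+1)%N by rewrite ltnS subset_leq_card.
  by rewrite -(inj_eq val_inj) /= inordK.
transitivity (\sum_(S in [set S0 : {set T} | (S0 \subset X) && (#|S0| == i)]) F i).
  by apply: eq_bigr => S; rewrite inE => /andP[_ /eqP->].
by rewrite sumr_const cards_draws.
Qed.

Lemma sum_alt (R : comNzRingType) (T : finType) (X : {set T}) :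
  \sum_(S in powerset X) (-1 : R) ^+ #|S| = (#|X| == 0%N)%:R.
Proof.
rewrite (sum_powerset_card _ _ X (fun i => (-1 : R) ^+ i)).
transitivity ((1 + -1 : R) ^+ #|X|); last by rewrite subrr expr0n.
by rewrite exprDn; apply: eq_bigr => i _; rewrite expr1n mul1r.
Qed.

Lemma sum_binom (R : comNzRingType) (T : finType) (W : {set T}) (p q : R) :
  p + q = 1 ->
  \sum_(A in powerset W) p ^+ #|A| * q ^+ (#|W| - #|A|) = 1.
Proof.
move=> hpq.
rewrite (sum_powerset_card _ _ W (fun i => p ^+ i * q ^+ (#|W| - i))).
transitivity ((q + p) ^+ #|W|); last by rewrite addrC hpq expr1n.
by rewrite exprDn; apply: eq_bigr => i _; rewrite mulrC.
Qed.

Lemma sum_ind (R : nzSemiRingType) (T : finType) (A : {pred T}) (P : pred T) :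
  \sum_(x in A) (if P x then 1 else 0 : R) = #|[set x in A | P x]|%:R.
Proof.
rewrite -big_mkcondr (eq_bigl (mem [set x in A | P x])); last by move=> x; rewrite !inE.
by rewrite sumr_const.
Qed.

Lemma sum_indn (T : finType) (A : {pred T}) (P : pred T) :
  (\sum_(x in A) (if P x then 1 else 0) = #|[set x in A | P x]|)%N.
Proof.
rewrite -big_mkcondr (eq_bigl (mem [set x in A | P x])); last by move=> x; rewrite !inE.
by rewrite sum1_card.
Qed.

Lemma sup_count (T : finType) (J X : {set T}) (t : nat) :
  J \subset X -> (#|J| <= t)%N ->
  #|[set S : {set T} | (J \subset S) && (S \subset X) && (#|S| == t)]| = 'C(#|X| - #|J|, t - #|J|).
Proof.
move=> sJX leJt.
have cXJ : #|X :\: J| = (#|X| - #|J|)%N by rewrite cardsD (setIidPr sJX).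
rewrite -cXJ -cards_draws.
rewrite -[RHS](card_in_imset (f := fun D : {set T} => D :|: J)); last first.
  move=> D1 D2; rewrite !inE => /andP[] ; rewrite subsetD => /andP[_ d1] _ /andP[];
    rewrite subsetD => /andP[_ d2] _ E.
  have key : forall D : {set T}, [disjoint D & J] -> D = (D :|: J) :\: J.
    by move=> D d; rewrite setDUl setDv setU0 (setDidPl d).
  by rewrite (key _ d1) (key _ d2) /= E.
apply: eq_card => S; rewrite !inE; apply/idP/imsetP.
- case/andP => /andP[sJS sSX] /eqP cS; exists (S :\: J).
    by rewrite inE setSD //= cardsD (setIidPr sJS) cS eqxx.
  apply/setP => x; rewrite !inE; case: (boolP (x \in J)) => xJ /=; last by rewrite orbF.
  by rewrite (subsetP sJS).
- case=> D; rewrite inE => /andP[]; rewrite subsetD => /andP[sDX dDJ] /eqP cD ->.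
  rewrite subsetUr subUset sDX sJX /= cardsU (disjoint_setI0 dDJ) cards0 subn0 cD.
  by rewrite subnK.
Qed.

Lemma block_count (T : finType) (blocks : {set {set T}}) (t k : nat)
  (hdes : is_design1 blocks t k) (J : {set T}) :
  (#|J| <= t)%N -> (t <= k)%N ->
  (#|[set b in blocks | J \subset b]| * 'C(k - #|J|, t - #|J|) = 'C(#|T| - #|J|, t - #|J|))%N.
Proof.
move=> leJt letk; case: hdes => hk h1.
pose P (b S : {set T}) := (J \subset S) && (S \subset b) && (#|S| == t).
have E : (\sum_(b in blocks) \sum_(S : {set T}) (if P b S then 1 else 0) =
          \sum_(S : {set T}) \sum_(b in blocks) (if P b S then 1 else 0))%N
  by exact: exchange_big.
have L : (\sum_(b in blocks) \sum_(S : {set T}) (if P b S then 1 else 0) =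
          #|[set b in blocks | J \subset b]| * 'C(k - #|J|, t - #|J|))%N.
  rewrite (eq_bigr (fun b : {set T} => if J \subset b then 'C(k - #|J|, t - #|J|) else 0)%N).
    rewrite -big_mkcondr (eq_bigl (mem [set b in blocks | J \subset b])) ?sum_nat_const //.
    by move=> b; rewrite !inE.
  move=> b bB; rewrite -big_mkcond sum1dep_card.
  case: ifP => sJb.
    by rewrite -(hk b bB) -sup_count.
  apply/eqP; rewrite cards_eq0; apply/eqP/setP => S; rewrite !inE /P.
  apply/negbTE; apply/negP => /andP[/andP[sJS sSb] _].
  by rewrite (subset_trans sJS sSb) in sJb.
have Rt : (\sum_(S : {set T}) \sum_(b in blocks) (if P b S then 1 else 0) =
           'C(#|T| - #|J|, t - #|J|))%N.
  rewrite (eq_bigr (fun S : {set T} => if (J \subset S) && (#|S| == t) then 1 else 0)%N).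
    rewrite -big_mkcond sum1dep_card -cardsT -(sup_count T J [set: T]) ?subsetT //.
    by apply: eq_card => S; rewrite !inE subsetT andbT.
  move=> S _; case: ifP => hS.
    rewrite (eq_bigr (fun b : {set T} => if S \subset b then 1 else 0)%N); last first.
      by move=> b _; rewrite /P; case/andP: hS => -> ->; rewrite andbT.
    by rewrite sum_indn (h1 S) //; apply/eqP; case/andP: hS.
  rewrite big1 // => b _; case: ifP => // /andP[/andP[a _] c].
  by rewrite a c in hS.
by rewrite -L E Rt.
Qed.

Lemma r_count (T : finType) (blocks : {set {set T}}) (t k : nat)
  (hdes : is_design1 blocks t k) (B0 : {set T}) (hB0 : B0 \in blocks) (J : {set T}) :
  J \subset B0 -> (t < k)%N ->
  #|[set b in blocks | J \subset b]| = r_des #|T| k t #|J|.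
Proof.
move=> sJB ltk; rewrite /r_des.
case: (leqP #|J| t) => hJ.
  rewrite -(block_count _ _ _ _ hdes _ hJ (ltnW ltk)) mulnK // bin_gt0 leq_sub2r //; exact: ltnW.
have -> : (t - #|J| = 0)%N by apply/eqP; rewrite subn_eq0; exact: ltnW.
rewrite !bin0 divnn /=.
have [S0] : exists S0 : {set T}, S0 \in [set A : {set T} | A \subset J & #|A| == t].
  by apply/set0Pn; rewrite -card_gt0 cards_draws bin_gt0; exact: ltnW.
rewrite inE => /andP[sS0J /eqP cS0].
case: hdes => _ h1.
apply/eqP; rewrite eqn_leq; apply/andP; split.
  rewrite -(h1 S0 cS0); apply: subset_leq_card; apply/subsetP => b; rewrite !inE.
  by case/andP => -> sJb /=; exact: subset_trans sS0J sJb.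
by rewrite card_gt0; apply/set0Pn; exists B0; rewrite inE hB0 sJB.
Qed.

Lemma r_ge (v k t j : nat) : (t <= j)%N -> r_des v k t j = 1%N.
Proof.
move=> h; rewrite /r_des; have -> : (t - j = 0)%N by apply/eqP; rewrite subn_eq0.
by rewrite !bin0.
Qed.

Lemma N_count (T : finType) (blocks : {set {set T}}) (t k : nat)
  (hdes : is_design1 blocks t k) (B0 : {set T}) (hB0 : B0 \in blocks)
  (ht : (2 <= t)%N) (ltk : (t < k)%N) (S : {set T}) :
  S \subset B0 ->
  (#|[set b in blocks :\ B0 | ~~ [disjoint b & S]]|)%:Z = e_des #|T| k t #|S|.
Proof.
move=> sSB.
set U := blocks :\ B0.
have cJ : forall J : {set T}, J \subset B0 ->
    (#|[set b in U | J \subset b]|)%:Z = (r_des #|T| k t #|J|)%:Z - 1.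
  move=> J sJB; rewrite -(r_count _ _ _ _ hdes _ hB0 _ sJB ltk).
  have -> : [set b in blocks | J \subset b] = B0 |: [set b in U | J \subset b].
    apply/setP => b; rewrite !inE; case: (eqVneq b B0) => [->|] /=; by rewrite ?hB0 ?sJB.
  by rewrite cardsU1 !inE eqxx /= add1n -addn1 PoszD addrK.
transitivity (\sum_(b in U) (1 + \sum_(J in powerset S)
                 (-1) ^+ (#|J|.+1) * (if J \subset b then 1 else 0)) : int).
  rewrite -natz -sum_ind; apply: eq_bigr => b _.
  rewrite (eq_bigr (fun J : {set T} => - (if J \subset b then (-1) ^+ #|J| else 0 : int))); last first.
    by move=> J _; case: ifP; rewrite ?mulr0 ?oppr0 // exprS mulr1 mulN1r.
  rewrite sumrN -big_mkcondr.
  rewrite (eq_bigl (mem (powerset (S :&: b)))); last by move=> J; rewrite !inE subsetI.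
  rewrite sum_alt cards_eq0 setI_eq0 disjoint_sym.
  by case: [disjoint S & b]; rewrite /= ?subrr ?subr0.
rewrite big_split /= sumr_const exchange_big /=.
rewrite (eq_bigr (fun J : {set T} => (-1) ^+ (#|J|.+1) * ((r_des #|T| k t #|J|)%:Z - 1))); last first.
  move=> J; rewrite powersetE => sJS.
  by rewrite -big_distrr /= sum_ind natz cJ // (subset_trans sJS sSB).
have -> : #|U| = #|[set b in U | set0 \subset b]| by apply: eq_card => b; rewrite !inE sub0set andbT.
rewrite natz cJ ?sub0set // cards0.
rewrite (sum_powerset_card _ _ S (fun i => (-1) ^+ i.+1 * ((r_des #|T| k t i)%:Z - 1))).
rewrite big_ord_recl /= bin0 expr1 mulN1r mulr1n addrA addrN add0r.
set n := #|S|.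
rewrite /e_des big_add1 /=.
rewrite (eq_bigr (fun i : 'I_n => (-1) ^+ (i.+2) * ('C(n, i.+1))%:Z * ((r_des #|T| k t i.+1)%:Z - 1))); last first.
  by move=> i _; rewrite /bump /= add1n -mulr_natr natz mulrAC.
rewrite -(big_mkord xpredT (fun i => (-1) ^+ (i.+2) * ('C(n, i.+1))%:Z * ((r_des #|T| k t i.+1)%:Z - 1))).
case: (leqP n (t - 1)) => h.
  by [].
rewrite (big_cat_nat _ (n:=t-1)) //; last exact: ltnW.
rewrite -[RHS]addr0; congr (_ + _); rewrite big_nat_cond big1 // => i /andP[/andP[hi _] _].
rewrite r_ge ?subrr ?mulr0 //.
by rewrite leq_subLR add1n in hi.
Qed.

Theorem mainTheorem10 (R : realFieldType) (T : finType)
  (blocks : {set {set T}}) (v k t : nat)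
  (hv : #|T| = v) (ht : (2 <= t)%N) (htk : (t < k)%N) (hkv : (k < v)%N)
  (hdes : is_design1 blocks t k)
  (B0 : {set T}) (hB0 : B0 \in blocks)
  (p : R) (hp0 : 0 <= p) (hp1 : p <= 1) :
  reliability blocks B0 p =
    1 + \sum_(1 <= i < k.+1)
          ((-1) ^+ i * ('C(k, i))%:R * (1 - p) ^ (e_des v k t i)).
Proof.
subst v.
have hk : #|B0| = k by case: hdes => hk _; exact: hk.
set U := blocks :\ B0; set q := 1 - p.
have stepA : reliability blocks B0 p = \sum_(A in powerset U)
    (p ^+ #|A| * q ^+ #|U :\: A| * (if B0 \subset \bigcup_(b in A) b then 1 else 0)).
  rewrite /reliability; apply: eq_bigr => A; rewrite powersetE => sAU.
  suff -> : [exists P in powerset A, repair_set blocks B0 P] =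
      (B0 \subset \bigcup_(b in A) b) by [].
  apply/existsP/idP.
  - case=> P /andP[]; rewrite powersetE => sPA /andP[_ cov].
    apply: (subset_trans cov); apply/bigcupsP => b bP.
    by apply: bigcup_sup; apply: (subsetP sPA).
  - by move=> cov; exists A; rewrite powersetE subxx /= /repair_set sAU cov.
have stepB : forall A : {set {set T}},
    (if B0 \subset \bigcup_(b in A) b then 1 else 0 : R) =
    \sum_(S in powerset B0) (if [disjoint S & \bigcup_(b in A) b] then (-1) ^+ #|S| else 0).
  move=> A; rewrite -big_mkcondr.
  rewrite (eq_bigl (mem (powerset (B0 :\: \bigcup_(b in A) b)))); last first.
    by move=> S; rewrite /= !powersetE subsetD.
  by rewrite sum_alt cards_eq0 setD_eq0; case: ifP.
rewrite stepA.
transitivity (\sum_(A in powerset U) \sum_(S in powerset B0)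
   (p ^+ #|A| * q ^+ #|U :\: A| *
     (if [disjoint S & \bigcup_(b in A) b] then (-1) ^+ #|S| else 0))).
  by apply: eq_bigr => A _; rewrite stepB big_distrr.
rewrite exchange_big /=.
transitivity (\sum_(S in powerset B0)
   ((-1) ^+ #|S| * q ^+ #|[set b in U | ~~ [disjoint b & S]]|)).
  apply: eq_bigr => S; rewrite powersetE => sSB.
  set W := [set b in U | [disjoint b & S]].
  have sWU : W \subset U by apply/subsetP => b; rewrite inE => /andP[].
  rewrite (eq_bigr (fun A : {set {set T}} => if A \subset W
       then p ^+ #|A| * q ^+ #|U :\: A| * (-1) ^+ #|S| else 0)); last first.
    move=> A; rewrite powersetE => sAU.
    have -> : [disjoint S & \bigcup_(b in A) b] = (A \subset W).
      apply/bigcup_disjointP/subsetP => h b bA.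
        by rewrite inE (subsetP sAU b bA) /= disjoint_sym; exact: h.
      by move: (h b bA); rewrite inE disjoint_sym => /andP[].
    by case: ifP; rewrite ?mulr0.
  rewrite -big_mkcondr (eq_bigl (fun A : {set {set T}} => A \in powerset W)); last first.
    move=> A; rewrite /= !powersetE; apply/andP/idP => [[] //| sAW]; split => //.
    exact: subset_trans sAW sWU.
  rewrite (eq_bigr (fun A : {set {set T}} => p ^+ #|A| * q ^+ (#|W| - #|A|) *
              (q ^+ #|U :\: W| * (-1) ^+ #|S|))); last first.
    move=> A; rewrite powersetE => sAW.
    have e : #|U :\: A| = (#|W| - #|A| + #|U :\: W|)%N.
      rewrite [#|U :\: A|]cardsD [#|U :\: W|]cardsD (setIidPr (subset_trans sAW sWU)) (setIidPr sWU).
      have := subset_leq_card sAW; have := subset_leq_card sWU; lia.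
    by rewrite e exprD !mulrA.
  rewrite -big_distrl /= sum_binom ?mul1r; last by rewrite /q addrC subrK.
  rewrite mulrC; congr (_ * q ^+ _); apply: eq_card => b; rewrite !inE.
  by case: [disjoint b & S]; case: (b != B0); case: (b \in blocks).
transitivity (\sum_(S in powerset B0)
   (fun i => (-1) ^+ i * q ^ (e_des #|T| k t i)) #|S|).
  apply: eq_bigr => S; rewrite powersetE => sSB /=.
  by rewrite -(N_count _ _ _ _ hdes _ hB0 ht htk _ sSB) -exprnP.
rewrite (sum_powerset_card _ _ B0 (fun i => (-1) ^+ i * q ^ (e_des #|T| k t i))) hk.
rewrite big_ord_recl /= bin0 expr0 mul1r mulr1n.
have -> : e_des #|T| k t 0 = 0 by rewrite /e_des big_geq // ltnS geq_minl.
rewrite expr0z; congr (_ + _).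
rewrite big_add1 /= big_mkord; apply: eq_bigr => i _.
by rewrite /bump /= !add1n -[LHS]mulr_natr mulrAC.
Qed.
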